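(* Let $\delta(n)=o(n)$. Then there is $n_0$ such that for all $n\ge n_0$, every $\delta(n)$-random labeled graph on $n$ nodes has diameter exactly $2$.
   Context: $C(x\mid y)$ denotes the Kolmogorov complexity of $x$ given $y$ with respect to a fixed universal Turing machine. A labeled graph $G$ on $\{1,\dots,n\}$ is encoded by the binary string $E(G)$ of length $n(n-1)/2$ whose $i$-th bit indicates presence of the $i$-th possible edge in lexicographic order. With $\mathcal G$ the set of all labeled graphs on $\{1,\dots,n\}$, $G$ is $\delta(n)$-random if $C(E(G)\mid n,\delta,\mathcal G)\ge n(n-1)/2-\delta(n)$. *)

(* Defs.v *)
From Stdlib Require Import ClassicalEpsilon.
From mathcomp Require Import all_boot.
Set Implicit Arguments. Unset Strict Implicit. Unset Printing Implicit Defensive.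

Inductive prf : Type :=
  | PZero : prf
  | PSucc : prf
  | PProj : nat -> prf
  | PComp : prf -> seq prf -> prf
  | PPrec : prf -> prf -> prf
  | PMu   : prf -> prf.

Inductive eval : prf -> seq nat -> nat -> Prop :=
  | ev_zero v : eval PZero v 0
  | ev_succ x v : eval PSucc (x :: v) x.+1
  | ev_proj i v : eval (PProj i) v (nth 0 v i)
  | ev_comp f gs v ws y : evals gs v ws -> eval f ws y -> eval (PComp f gs) v y
  | ev_prec0 f g v y : eval f v y -> eval (PPrec f g) (0 :: v) y
  | ev_precS f g k v z y :
      eval (PPrec f g) (k :: v) z -> eval g (k :: z :: v) y ->
      eval (PPrec f g) (k.+1 :: v) y
  | ev_mu f v n :
      eval f (n :: v) 0 ->
      (forall m, m < n -> exists k, eval f (m :: v) k.+1) ->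
      eval (PMu f) v n
with evals : seq prf -> seq nat -> seq nat -> Prop :=
  | evs_nil v : evals [::] v [::]
  | evs_cons g gs v y ys : eval g v y -> evals gs v ys -> evals (g :: gs) v (y :: ys).

(* Bijective coding of binary strings by natural numbers:
   [::] |-> 0, false :: s |-> 2 code s + 1, true :: s |-> 2 code s + 2. *)
Fixpoint code (s : seq bool) : nat :=
  match s with
  | [::] => 0
  | b :: s' => ((code s').*2 + b).+1
  end.

(* The partial computable function p, viewed as a conditional description
   method: program q with condition y describes x. *)
Definition describes (p : prf) (q y x : seq bool) : Prop :=
  eval p [:: code q; code y] (code x).

(* p is a universal (additively optimal) machine: it simulates every
   computable conditional description method with constant overhead,
   i.e. C_p(x|y) <= C_f(x|y) + c_f for all x, y. *)
Definition universal (p : prf) : Prop :=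
  forall f : prf, exists c : nat, forall q y x : seq bool,
    describes f q y x -> exists2 q', describes p q' y x & size q' <= size q + c.

(* Kolmogorov complexity C_p(x|y): the least length of a program q with
   describes p q y x (0 if there is none, which never happens for a
   universal p). *)
Definition has_descr_of_size (p : prf) (x y : seq bool) (k : nat) : bool :=
  if excluded_middle_informative (exists q, size q = k /\ describes p q y x)
  then true else false.

Lemma KC_ex (p : prf) (x y : seq bool) :
  (exists q, describes p q y x) -> exists k, has_descr_of_size p x y k.
Proof.
move=> [q Hq]; exists (size q); rewrite /has_descr_of_size.
by case: excluded_middle_informative => // -[]; exists q.
Qed.

Definition KC (p : prf) (x y : seq bool) : nat :=
  match excluded_middle_informative (exists q, describes p q y x) with
  | left H => ex_minn (KC_ex H)
  | right _ => 0
  end.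

(* Labeled graphs on n nodes (nodes 0..n-1 play the role of 1..n).     *)
(* A graph is a symmetric irreflexive relation adj : rel 'I_n.         *)

(* E(G): bit i tells whether the i-th pair (i<j) in lexicographic order
   (0,1),(0,2),...,(0,n-1),(1,2),... is an edge; length n(n-1)/2. *)
Definition graph_code (n : nat) (adj : rel 'I_n) : seq bool :=
  flatten [seq [seq adj i j | j <- [seq j : 'I_n <- enum 'I_n | i < j]] | i : 'I_n <- enum 'I_n].

(* Condition (n, delta(n)); the set of all labeled graphs on n nodes is
   determined by n.  Self-delimiting unary encoding. *)
Definition cond_info (n d : nat) : seq bool := nseq n true ++ false :: nseq d true.

Definition random_graph (U : prf) (delta : nat -> nat) (n : nat) (adj : rel 'I_n) : Prop :=
  n * (n - 1) %/ 2 - delta n <= KC U (graph_code adj) (cond_info n (delta n)).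

Definition small_o_n (delta : nat -> nat) : Prop :=
  forall k : nat, 0 < k -> exists N, forall n, N <= n -> k * delta n <= n.

Definition walk_le (n : nat) (adj : rel 'I_n) (i j : 'I_n) (k : nat) : Prop :=
  exists s : seq 'I_n, [/\ size s <= k, path adj i s & last i s = j].

Definition is_dist (n : nat) (adj : rel 'I_n) (i j : 'I_n) (k : nat) : Prop :=
  walk_le adj i j k /\ forall k', k' < k -> ~ walk_le adj i j k'.

Definition diameter_is (n : nat) (adj : rel 'I_n) (d : nat) : Prop :=
  (forall i j : 'I_n, exists2 k, is_dist adj i j k & k <= d) /\
  (exists i j : 'I_n, is_dist adj i j d).

(* Main.v *)
From Stdlib Require Import ClassicalEpsilon.
Require Import Defs.
From mathcomp Require Import all_boot.
From mathcomp Require Import zify.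
Set Implicit Arguments. Unset Strict Implicit. Unset Printing Implicit Defensive.


Definition computes (p : prf) (F : seq nat -> nat) := forall v, eval p v (F v).
Definition computess (ps : seq prf) (F : seq nat -> seq nat) := forall v, evals ps v (F v).

Lemma c_ext p F F' : computes p F -> (forall v, F v = F' v) -> computes p F'.
Proof. by move=> H E v; rewrite -E. Qed.
Lemma c_zero : computes PZero (fun _ => 0).
Proof. move=> v; exact: ev_zero. Qed.
Lemma c_proj i : computes (PProj i) (fun v => nth 0 v i).
Proof. move=> v; exact: ev_proj. Qed.
Lemma c_comp f F gs Gs : computes f F -> computess gs Gs ->
  computes (PComp f gs) (fun v => F (Gs v)).
Proof. move=> Hf Hg v; exact: ev_comp (Hg v) (Hf _). Qed.
Lemma cs_nil : computess [::] (fun _ => [::]).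
Proof. move=> v; exact: evs_nil. Qed.
Lemma cs_cons g G gs Gs : computes g G -> computess gs Gs ->
  computess (g :: gs) (fun v => G v :: Gs v).
Proof. move=> H1 H2 v; exact: evs_cons. Qed.
Definition succ g := PComp PSucc [:: g].
Lemma c_succ g G : computes g G -> computes (succ g) (fun v => (G v).+1).
Proof. move=> H v; apply: ev_comp; first by apply: evs_cons (H v) (evs_nil _). exact: ev_succ. Qed.

Fixpoint precf (F G : seq nat -> nat) (x : nat) (w : seq nat) : nat :=
  match x with 0 => F w | k.+1 => G (k :: precf F G k w :: w) end.
Lemma ev_prec f g F G : computes f F -> computes g G ->
  forall x w, eval (PPrec f g) (x :: w) (precf F G x w).
Proof. move=> Hf Hg; elim=> [|k IH] w /=; [exact: ev_prec0|exact: ev_precS]. Qed.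
Definition prc f g args := PComp (PPrec f g) args.
Lemma c_prec f g F G h H hs Hs : computes f F -> computes g G -> computes h H ->
  computess hs Hs ->
  computes (prc f g (h :: hs)) (fun v => precf F G (H v) (Hs v)).
Proof.
move=> Hf Hg Hh Hhs v; apply: ev_comp; first exact: evs_cons (Hh v) (Hhs v).
exact: ev_prec.
Qed.
Lemma ev_muP f F v n : computes f F -> F (n :: v) = 0 ->
  (forall m, m < n -> F (m :: v) != 0) -> eval (PMu f) v n.
Proof.
move=> Hf H0 Hm; apply: ev_mu; first by rewrite -H0.
move=> m /Hm; case E: (F (m :: v)) => [|k] // _; exists k; rewrite -E; exact: Hf.
Qed.

Create HintDb prf.
#[local] Hint Resolve c_zero c_proj c_comp cs_nil cs_cons c_succ c_prec : prf.
Ltac build := eapply c_ext; [solve [eauto 40 with prf] | move=> v /=].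

Definition ap1 f g := PComp f [:: g].
Definition ap2 f g h := PComp f [:: g; h].
Notation P0 := (PProj 0). Notation P1 := (PProj 1). Notation P2 := (PProj 2).
Notation P3 := (PProj 3). Notation P4 := (PProj 4). Notation P5 := (PProj 5).
Notation a0 v := (nth 0 v 0). Notation a1 v := (nth 0 v 1). Notation a2 v := (nth 0 v 2).
Notation a3 v := (nth 0 v 3). Notation a4 v := (nth 0 v 4).

Definition addp := prc P0 (succ P1) [:: P0; P1].
Lemma c_add : computes addp (fun v => a0 v + a1 v).
Proof. rewrite /addp; build. by elim: (a0 v) => //= k ->. Qed.
#[local] Hint Resolve c_add : prf.
Lemma c_ap1 f F g G : computes f F -> computes g G -> computes (ap1 f g) (fun v => F [:: G v]).
Proof. move=> *; rewrite /ap1; build. done. Qed.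
Lemma c_ap2 f F g G h H : computes f F -> computes g G -> computes h H ->
  computes (ap2 f g h) (fun v => F [:: G v; H v]).
Proof. move=> *; rewrite /ap2; build. done. Qed.
#[local] Hint Resolve c_ap1 c_ap2 : prf.

Definition mulp := prc PZero (ap2 addp P1 P2) [:: P0; P1].
Lemma c_mul : computes mulp (fun v => a0 v * a1 v).
Proof. rewrite /mulp; build. elim: (a0 v) => //= k ->; rewrite mulSn; lia. Qed.
#[local] Hint Resolve c_mul : prf.
Definition predp := prc PZero P0 [:: P0].
Lemma c_pred : computes predp (fun v => (a0 v).-1).
Proof. rewrite /predp; build. by case: (a0 v). Qed.
#[local] Hint Resolve c_pred : prf.
Definition subp := prc P0 (ap1 predp P1) [:: P1; P0].
Lemma c_sub : computes subp (fun v => a0 v - a1 v).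
Proof. rewrite /subp; build. elim: (a1 v) => //= [|k ->]; [by rewrite subn0 | by rewrite subnS]. Qed.
#[local] Hint Resolve c_sub : prf.


Definition onep := succ PZero.
Lemma c_one : computes onep (fun _ => 1).
Proof. rewrite /onep; build. done. Qed.
#[local] Hint Resolve c_one : prf.
Definition iszp g := ap2 subp onep g.
Lemma c_isz g G : computes g G -> computes (iszp g) (fun v => nat_of_bool (G v == 0)).
Proof. move=> H; rewrite /iszp; build. by case: (G v). Qed.
#[local] Hint Resolve c_isz : prf.
Definition nzp g := iszp (iszp g).
Lemma c_nz g G : computes g G -> computes (nzp g) (fun v => nat_of_bool (0 < G v)).
Proof. move=> H; rewrite /nzp; build. by case: (G v). Qed.
#[local] Hint Resolve c_nz : prf.
Definition ltp := nzp (ap2 subp P1 P0).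
Lemma c_lt : computes ltp (fun v => nat_of_bool (a0 v < a1 v)).
Proof. rewrite /ltp; build. by rewrite subn_gt0. Qed.
#[local] Hint Resolve c_lt : prf.
Definition lep := iszp (ap2 subp P0 P1).
Lemma c_le : computes lep (fun v => nat_of_bool (a0 v <= a1 v)).
Proof. rewrite /lep; build. by rewrite subn_eq0. Qed.
#[local] Hint Resolve c_le : prf.
Definition eqp := iszp (ap2 addp (ap2 subp P0 P1) (ap2 subp P1 P0)).
Lemma c_eq : computes eqp (fun v => nat_of_bool (a0 v == a1 v)).
Proof. rewrite /eqp; build. rewrite addn_eq0 !subn_eq0 eqn_leq. done. Qed.
#[local] Hint Resolve c_eq : prf.
Definition andp := mulp.
Lemma c_and : computes andp (fun v => a0 v * a1 v).
Proof. exact: c_mul. Qed.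
Definition orp := nzp addp.
Lemma c_or : computes orp (fun v => nat_of_bool (0 < a0 v + a1 v)).
Proof. rewrite /orp; build. done. Qed.
#[local] Hint Resolve c_or : prf.
Definition mod2p := prc PZero (iszp P1) [:: P0].
Lemma c_mod2 : computes mod2p (fun v => nat_of_bool (odd (a0 v))).
Proof. rewrite /mod2p; build. elim: (a0 v) => //= k ->. by case: (odd k). Qed.
#[local] Hint Resolve c_mod2 : prf.
Definition div2p := prc PZero (ap2 addp P1 (ap1 mod2p P0)) [:: P0].
Lemma c_div2 : computes div2p (fun v => (a0 v)./2).
Proof. rewrite /div2p; build. elim: (a0 v) => //= k ->. rewrite uphalf_half; lia. Qed.
#[local] Hint Resolve c_div2 : prf.
Definition idiv2p := prc P0 (ap1 div2p P1) [:: P0; P1].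
Lemma c_idiv2 : computes idiv2p (fun v => a1 v %/ 2 ^ a0 v).
Proof. rewrite /idiv2p; build. elim: (a0 v) => /= [|k ->]; first by rewrite divn1.
by rewrite expnSr divnMA divn2. Qed.
#[local] Hint Resolve c_idiv2 : prf.
Definition pow2p := prc onep (ap2 addp P1 P1) [:: P0].
Lemma c_pow2 : computes pow2p (fun v => 2 ^ a0 v).
Proof. rewrite /pow2p; build. elim: (a0 v) => //= k ->. rewrite expnS; lia. Qed.
#[local] Hint Resolve c_pow2 : prf.
Definition bitf (m p : nat) : bool := odd (m.+1 %/ 2 ^ p).
Definition bitp := ap1 mod2p (ap2 idiv2p P1 (succ P0)).
Lemma c_bit : computes bitp (fun v => nat_of_bool (bitf (a0 v) (a1 v))).
Proof. rewrite /bitp; build. done. Qed.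
#[local] Hint Resolve c_bit : prf.


Fixpoint rsf n a := match a with 0 => 0 | i.+1 => rsf n i + (n.-1 - i) end.
Definition pos n i j := rsf n i + (j - i).-1.
Definition posm n i k := if i < k then pos n i k else pos n k i.
Definition innerb (b : nat -> bool) n i j k :=
  (k == i) || (k == j) || ~~ (b (posm n i k) && b (posm n j k)).
Definition pairok (b : nat -> bool) n i j :=
  (i < j) && ~~ b (pos n i j) && all (innerb b n i j) (iota 0 n).
Definition bad (b : nat -> bool) n := has (fun i => has (pairok b n i) (iota 0 n)) (iota 0 n).

Lemma has_iotaS (p : pred nat) t : has p (iota 0 t.+1) = has p (iota 0 t) || p t.
Proof. by rewrite -addn1 iotaD has_cat /= orbF. Qed.
Lemma all_iotaS (p : pred nat) t : all p (iota 0 t.+1) = all p (iota 0 t) && p t.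
Proof. by rewrite -addn1 iotaD all_cat /= andbT. Qed.

Definition rsp := prc PZero (ap2 addp P1 (ap2 subp (ap1 predp P2) P0)) [:: P0; P1].
Lemma c_rs : computes rsp (fun v => rsf (a1 v) (a0 v)).
Proof. rewrite /rsp; build. by elim: (a0 v) => //= k ->. Qed.
#[local] Hint Resolve c_rs : prf.
Definition posp := ap2 addp (ap2 rsp P1 P0) (ap1 predp (ap2 subp P2 P1)).
Lemma c_pos : computes posp (fun v => pos (a0 v) (a1 v) (a2 v)).
Proof. rewrite /posp; build. done. Qed.
#[local] Hint Resolve c_pos : prf.
Definition itep c a b := ap2 addp (ap2 mulp c a) (ap2 mulp (iszp c) b).
Definition posmp := itep (ap2 ltp P1 P2) posp (PComp posp [:: P0; P2; P1]).
Lemma c_posm : computes posmp (fun v => posm (a0 v) (a1 v) (a2 v)).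
Proof.
rewrite /posmp /itep; build. rewrite /posm; case: (_ < _) => /=; lia.
Qed.
#[local] Hint Resolve c_posm : prf.
Definition innerp := ap2 orp (ap2 orp (ap2 eqp P0 P3) (ap2 eqp P0 P4))
  (iszp (ap2 andp (ap2 bitp P1 (PComp posmp [:: P2; P3; P0]))
                  (ap2 bitp P1 (PComp posmp [:: P2; P4; P0])))).
Lemma c_inner : computes innerp
  (fun v => nat_of_bool (innerb (bitf (a1 v)) (a2 v) (a3 v) (a4 v) (a0 v))).
Proof.
rewrite /innerp; build. rewrite /innerb.
case: (_ == _); case: (_ == _); case: bitf; case: bitf => //.
Qed.
#[local] Hint Resolve c_inner : prf.
Definition allkp := prc onep (ap2 mulp P1 (PComp innerp [:: P0; P2; P3; P4; P5])) [:: P0; P1; P2; P3; P4].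
Lemma c_allk : computes allkp
  (fun v => nat_of_bool (all (innerb (bitf (a1 v)) (a2 v) (a3 v) (a4 v)) (iota 0 (a0 v)))).
Proof.
rewrite /allkp; build. elim: (a0 v) => // k IH. rewrite all_iotaS /= IH.
by case: all; case: innerb.
Qed.
#[local] Hint Resolve c_allk : prf.
Definition pairokp := ap2 mulp (ap2 mulp (ap2 ltp P2 P3) (iszp (ap2 bitp P0 (PComp posp [:: P1; P2; P3]))))
   (PComp allkp [:: P1; P0; P1; P2; P3]).
Lemma c_pairok : computes pairokp (fun v => nat_of_bool (pairok (bitf (a0 v)) (a1 v) (a2 v) (a3 v))).
Proof.
rewrite /pairokp; build. rewrite /pairok.
by case: (_ < _); case: bitf; case: all.
Qed.
#[local] Hint Resolve c_pairok : prf.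
Definition exjp := prc PZero (ap2 orp P1 (PComp pairokp [:: P2; P3; P4; P0])) [:: P0; P1; P2; P3].
Lemma c_exj : computes exjp
  (fun v => nat_of_bool (has (pairok (bitf (a1 v)) (a2 v) (a3 v)) (iota 0 (a0 v)))).
Proof.
rewrite /exjp; build. elim: (a0 v) => // k IH. rewrite has_iotaS /= IH.
by case: has; case: pairok.
Qed.
#[local] Hint Resolve c_exj : prf.
Definition exip := prc PZero (ap2 orp P1 (PComp exjp [:: P3; P2; P3; P0])) [:: P0; P1; P2].
Lemma c_exi : computes exip
  (fun v => nat_of_bool (has (fun i => has (pairok (bitf (a1 v)) (a2 v) i) (iota 0 (a2 v))) (iota 0 (a0 v)))).
Proof.
rewrite /exip; build. elim: (a0 v) => // k IH. rewrite has_iotaS /= IH.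
by case: has; case: has.
Qed.
#[local] Hint Resolve c_exi : prf.
Definition badp := PComp exip [:: P1; P0; P1].
Lemma c_bad : computes badp (fun v => nat_of_bool (bad (bitf (a0 v)) (a1 v))).
Proof. rewrite /badp; build. done. Qed.
#[local] Hint Resolve c_bad : prf.


Definition Nf n := rsf n n.
Definition Pf m n : bool := (2 ^ Nf n - 1 <= m) && (m < 2 ^ (Nf n).+1 - 1) &&
   (bad (bitf m) n || (m == 2 ^ (Nf n).+1 - 2)).
Definition Np := PComp rsp [:: P1; P1].
Definition Pp := ap2 mulp (ap2 mulp (ap2 lep (ap2 subp (ap1 pow2p Np) onep) P0)
                                    (ap2 ltp P0 (ap2 subp (ap1 pow2p (succ Np)) onep)))
                          (ap2 orp badp (ap2 eqp P0 (ap2 subp (ap1 pow2p (succ Np)) (succ onep)))).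
Lemma c_P : computes Pp (fun v => nat_of_bool (Pf (a0 v) (a1 v))).
Proof.
rewrite /Pp /Np; build. rewrite /Pf /Nf.
by case: (_ <= _); case: (_ < _); case: bad; case: (_ == _).
Qed.
#[local] Hint Resolve c_P : prf.
Fixpoint cntf n t := match t with 0 => 0 | i.+1 => cntf n i + Pf i n end.
Definition cntp := prc PZero (ap2 addp P1 (PComp Pp [:: P0; P2])) [:: P0; P1].
Lemma c_cnt : computes cntp (fun v => cntf (a1 v) (a0 v)).
Proof. rewrite /cntp; build. by elim: (a0 v) => //= k ->. Qed.
#[local] Hint Resolve c_cnt : prf.
Definition Gp := ap2 subp (succ P1) (PComp cntp [:: succ P0; P2]).
Lemma c_G : computes Gp (fun v => (a1 v).+1 - cntf (a2 v) (a0 v).+1).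
Proof. rewrite /Gp; build. done. Qed.
Definition Nexp := PMu (ap2 bitp P2 P0).
Definition Dp := PComp (PMu Gp) [:: P0; Nexp].

Lemma cntf_mono n s t : s <= t -> cntf n s <= cntf n t.
Proof. elim: t => [|t IH]; first by rewrite leqn0 => /eqP ->.
rewrite leq_eqVlt => /orP [/eqP -> //| /IH] /= H; lia. Qed.

Lemma codeS1 b s : (code (b :: s)).+1 = b + (code s).+1 * 2.
Proof. rewrite /= -muln2; case: b => /=; lia. Qed.

Lemma bit_code s k : k < size s -> bitf (code s) k = nth false s k.
Proof.
rewrite /bitf; elim: s k => [//|b s IH] [|k] /= Hk; rewrite codeS1.
  by rewrite expn0 divn1 oddD oddM /= andbF addbF; case: b.
rewrite expnS mulnC divnMA.
have -> : (b + 2 * (code s).+1) %/ 2 = (code s).+1 by case: b => /=; lia.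
exact: IH.
Qed.

Lemma eval_Nex q n d : eval Nexp [:: q; code (cond_info n d)] n.
Proof.
have Hs : forall k, k <= n -> bitf (code (cond_info n d)) k = (k != n).
  move=> k Hk; rewrite bit_code; last by rewrite /cond_info size_cat size_nseq /=; lia.
  rewrite /cond_info nth_cat size_nseq; case: ltnP => Hkn.
    by rewrite nth_nseq Hkn; apply/esym; apply/eqP; lia.
  have -> : k = n by lia. by rewrite subnn eqxx.
apply: (ev_muP (F := fun v => nat_of_bool (bitf (a2 v) (a0 v)))).
- by build.
- by rewrite /= Hs // eqxx.
- by move=> m Hm /=; rewrite Hs ?(ltnW Hm) // (ltn_eqF Hm).
Qed.

Lemma eval_D n d x : Pf x n -> eval Dp [:: cntf n x; code (cond_info n d)] x.
Proof.
move=> Hx; apply: ev_comp.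
  apply: evs_cons; first exact: ev_proj.
  apply: evs_cons; first exact: eval_Nex.
  exact: evs_nil.
apply: (ev_muP c_G) => /=; first by rewrite Hx addn1 subnn.
move=> m Hm; have := cntf_mono n Hm; rewrite /= subn_eq0 -ltnNge; lia.
Qed.


Section Count.
Variable N : nat.
Notation T := (N.-tuple bool).
Definition fl (a : nat) (t : T) : T :=
  [tuple (if (i : nat) == a then ~~ tnth t i else tnth t i) | i < N].
Definition bt (t : T) p := nth false t p.

Lemma bt_fl a t p : a < N -> bt (fl a t) p = if p == a then ~~ bt t p else bt t p.
Proof.
move=> Ha; rewrite /bt; case: (ltnP p N) => Hp.
  by rewrite -(tnth_nth false (fl a t) (Ordinal Hp)) tnth_mktuple /= (tnth_nth false).
rewrite !nth_default ?size_tuple //; by rewrite (gtn_eqF (leq_trans Ha Hp)).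
Qed.
Lemma flK a : involutive (fl a).
Proof.
move=> t; apply: eq_from_tnth => i; rewrite !tnth_mktuple.
by case: (_ == _); rewrite ?negbK.
Qed.
Lemma fl_inj a : injective (fl a). Proof. exact: inv_inj (flK a). Qed.

Definition S (F : T -> bool) := \sum_(t : T) (F t : nat).
Lemma S_fl a F : S F = S (fun t => F (fl a t)).
Proof. by rewrite /S (reindex_inj (@fl_inj a)). Qed.
Lemma S_ext F1 F2 : F1 =1 F2 -> S F1 = S F2.
Proof. by move=> E; apply: eq_bigr => t _; rewrite E. Qed.

Lemma count_pair (G : T -> bool) a b : a < N -> b < N -> a != b ->
  (forall t, G (fl a t) = G t) -> (forall t, G (fl b t) = G t) ->
  4 * S (fun t => G t && ~~ (bt t a && bt t b)) = 3 * S G.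
Proof.
move=> Ha Hb Hab Ga Gb.
set C := fun t => G t && ~~ (bt t a && bt t b).
have nab : (a == b) = false := negbTE Hab.
have nba : (b == a) = false by rewrite eq_sym.
have E1 : S C = S (fun t => G t && ~~ (~~ bt t a && bt t b)).
  by rewrite (S_fl a); apply: S_ext => t; rewrite /C Ga !bt_fl // eqxx nba.
have E2 : S C = S (fun t => G t && ~~ (bt t a && ~~ bt t b)).
  by rewrite (S_fl b); apply: S_ext => t; rewrite /C Gb !bt_fl // eqxx nab.
have E3 : S C = S (fun t => G t && ~~ (~~ bt t a && ~~ bt t b)).
  by rewrite (S_fl a) (S_fl b); apply: S_ext => t; rewrite /C Ga Gb !bt_fl // !eqxx nab nba.
have -> : 4 * S C = S C + S C + S C + S C by lia.
rewrite {2}E1 {2}E2 {2}E3 /S -!big_split big_distrr /=; apply: eq_bigr => t _.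
by rewrite /C; case: (G t); case: (bt t a); case: (bt t b).
Qed.

Lemma count_single (G : T -> bool) c : c < N ->
  (forall t, G (fl c t) = G t) -> 2 * S (fun t => G t && ~~ bt t c) = S G.
Proof.
move=> Hc Gc.
have E1 : S (fun t => G t && ~~ bt t c) = S (fun t => G t && bt t c).
  rewrite (S_fl c); apply: S_ext => t; by rewrite Gc bt_fl // eqxx negbK.
rewrite mul2n -addnn {2}E1 /S -big_split; apply: eq_bigr => t _ /=.
by case: (G t); case: (bt t c).
Qed.

Lemma S_true : S (fun _ => true) = 2 ^ N.
Proof. by rewrite /S /= sum1_card card_tuple card_bool. Qed.

Lemma count_gen (c : nat) (al be : nat -> nat) (ks : seq nat) :
  c < N -> uniq ks ->
  (forall k, k \in ks -> [/\ al k < N, be k < N, al k != be k, al k != c & be k != c]) ->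
  (forall k k', k \in ks -> k' \in ks -> k != k' ->
     [/\ al k != al k', al k != be k', be k != al k' & be k != be k']) ->
  2 * 4 ^ size ks * S (fun t => ~~ bt t c && all (fun k => ~~ (bt t (al k) && bt t (be k))) ks)
  = 3 ^ size ks * 2 ^ N.
Proof.
move=> Hc; elim: ks => [|k ks IH] /= Uks H1 H2.
  rewrite -S_true -(count_single (G := fun _ => true) Hc) //.
  by rewrite muln1 mul1n; congr (2 * _); apply: S_ext => t; rewrite andbT.
case/andP: Uks => kks Uks.
have [Ha Hb Hab Hac Hbc] := H1 k (mem_head _ _).
have H1' : forall k', k' \in ks -> [/\ al k' < N, be k' < N, al k' != be k', al k' != c & be k' != c].
  by move=> k' Hk'; apply: H1; rewrite in_cons Hk' orbT.
have H2' : forall k1 k2, k1 \in ks -> k2 \in ks -> k1 != k2 ->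
     [/\ al k1 != al k2, al k1 != be k2, be k1 != al k2 & be k1 != be k2].
  by move=> k1 k2 h1 h2; apply: H2; rewrite in_cons ?h1 ?h2 orbT.
rewrite !expnS -[in RHS]mulnA -(IH Uks H1' H2').
set G := fun t => ~~ bt t c && all (fun k => ~~ (bt t (al k) && bt t (be k))) ks.
have -> : S (fun t => ~~ bt t c && (~~ (bt t (al k) && bt t (be k)) &&
                all (fun k => ~~ (bt t (al k) && bt t (be k))) ks))
          = S (fun t => G t && ~~ (bt t (al k) && bt t (be k))).
  apply: S_ext => t; rewrite /G; by case: (bt t c); case: all; case: (bt t (al k) && bt t (be k)).
have inv : forall a, (a = al k \/ a = be k) -> forall t, G (fl a t) = G t.
  move=> a Ha' t; have aN : a < N by case: Ha' => ->.
  rewrite /G bt_fl // (_ : (c == a) = false); last first.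
    by case: Ha' => ->; apply/negbTE; rewrite eq_sym.
  congr (_ && _); apply: eq_in_all => k' Hk' /=.
  have kk' : k != k' by apply: contraNneq kks => ->.
  have Hk'' : k' \in k :: ks by rewrite in_cons Hk' orbT.
  have [n1 n2 n3 n4] := H2 k k' (mem_head _ _) Hk'' kk'.
  rewrite !bt_fl //; case: Ha' => ->.
    by rewrite (eq_sym (al k')) (eq_sym (be k')) (negbTE n1) (negbTE n2).
  by rewrite (eq_sym (al k')) (eq_sym (be k')) (negbTE n3) (negbTE n4).
have := count_pair Ha Hb Hab (inv _ (or_introl erefl)) (inv _ (or_intror erefl)).
rewrite -/G; nia.
Qed.

End Count.


Lemma rsfS n a : rsf n a.+1 = rsf n a + (n.-1 - a). Proof. by []. Qed.
Lemma rsf_mono n a b : a <= b -> rsf n a <= rsf n b.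
Proof. elim: b => [|b IH]; first by rewrite leqn0 => /eqP ->.
rewrite leq_eqVlt => /orP [/eqP -> //| /IH] /= H; lia. Qed.
Lemma pos_lt n a b : a < b -> b < n -> pos n a b < rsf n a.+1.
Proof. rewrite /pos rsfS; lia. Qed.
Lemma pos_ge n a b : rsf n a <= pos n a b.
Proof. rewrite /pos; lia. Qed.
Lemma pos_N n a b : a < b -> b < n -> pos n a b < Nf n.
Proof. move=> h1 h2; apply: (leq_trans (pos_lt h1 h2)); apply: rsf_mono; lia. Qed.
Lemma pos_inj n a b a' b' : a < b -> b < n -> a' < b' -> b' < n ->
  pos n a b = pos n a' b' -> a = a' /\ b = b'.
Proof.
move=> h1 h2 h3 h4 E.
have [aa|aa|aa] := ltngtP a a'.
- have := pos_lt h1 h2; have := rsf_mono n aa; have := pos_ge n a' b'; lia.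
- have := pos_lt h3 h4; have := rsf_mono n aa; have := pos_ge n a b; lia.
- subst a'; move: E; rewrite /pos; lia.
Qed.
Lemma posmE n i k : i != k -> posm n i k = pos n (minn i k) (maxn i k).
Proof. rewrite /posm /minn /maxn; case: ltngtP => //; lia. Qed.
Lemma posm_N n i k : i != k -> i < n -> k < n -> posm n i k < Nf n.
Proof. move=> h h1 h2; rewrite posmE //; apply: pos_N; lia. Qed.
Lemma posm_inj n a b a' b' : a != b -> a' != b' -> a < n -> b < n -> a' < n -> b' < n ->
  posm n a b = posm n a' b' -> (a = a' /\ b = b') \/ (a = b' /\ b = a').
Proof.
move=> h1 h2 h3 h4 h5 h6; rewrite !posmE // => /pos_inj [||||]; try lia.
Qed.
Lemma Nf_closed n : Nf n = n * (n - 1) %/ 2.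
Proof.
have H : forall a, a <= n -> 2 * rsf n a + (n - a) * (n - a - 1) = n * (n - 1).
  elim=> [|a IH] Ha; first by rewrite muln0 subn0 add0n.
  rewrite rsfS; have := IH (ltnW Ha).
  have -> : n - a = (n - a.+1).+1 by lia.
  have -> : n.-1 - a = n - a.+1 by lia.
  move: (rsf n a) (n - a.+1) (n * (n - 1)) => R k X.
  case: k => [|k]; rewrite /= ?subn0 ?subSS ?subn0; nia.
have := H n (leqnn n); rewrite /Nf subnn mul0n addn0 => <-; lia.
Qed.

Lemma bad_ext (b1 b2 : nat -> bool) n : (forall p, p < Nf n -> b1 p = b2 p) -> bad b1 n = bad b2 n.
Proof.
move=> E; apply: eq_in_has => i; rewrite mem_iota => /andP [_ Hi].
apply: eq_in_has => j; rewrite mem_iota => /andP [_ Hj] /=.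
rewrite /pairok; case: ltnP => //= ij.
rewrite E; last exact: pos_N.
congr (_ && _); apply: eq_in_all => k; rewrite mem_iota => /andP [_ Hk].
rewrite /innerb; case: eqP => //= ki; case: eqP => //= kj.
rewrite !E //; apply: posm_N => //; apply/eqP; lia.
Qed.

Lemma code_lb s : 2 ^ size s <= (code s).+1.
Proof. elim: s => [//|b s IH]; rewrite codeS1 /= expnS; lia. Qed.
Lemma code_ub s : (code s).+1 < 2 ^ (size s).+1.
Proof. elim: s => [//|b s IH]; rewrite codeS1 /= expnS; case: b => /=; lia. Qed.
Lemma code_surj m : exists s, code s = m.
Proof.
elim/ltn_ind: m => [[|m] IH]; first by exists [::].
have [s Hs] := IH m./2 (ltac:(lia)).
exists (odd m :: s) => /=; rewrite Hs; have := odd_double_half m; case: (odd m) => /=; lia.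
Qed.
Lemma code_inj : injective code.
Proof.
elim=> [|b1 s1 IH] [|b2 s2] //= E.
have [E1 E2] : b1 = b2 /\ code s1 = code s2 by case: b1 b2 E => [] [] /=; lia.
by rewrite E1 (IH _ E2).
Qed.
Lemma code_nseq k : code (nseq k true) = 2 ^ k.+1 - 2.
Proof.
elim: k => [//|k IH] /=; rewrite IH [2 ^ k.+2]expnS.
have : 2 <= 2 ^ k.+1 by rewrite expnS; have := expn_gt0 2 k; lia.
lia.
Qed.
Lemma Pf_code s n : size s = Nf n -> Pf (code s) n = bad (nth false s) n || (s == nseq (Nf n) true).
Proof.
move=> Hs; rewrite /Pf.
have -> : (2 ^ Nf n - 1 <= code s) && (code s < 2 ^ (Nf n).+1 - 1).
  have := code_lb s; have := code_ub s; rewrite Hs; lia.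
rewrite -code_nseq (inj_eq code_inj) /=; congr (_ || _).
apply: bad_ext => p Hp; rewrite bit_code //; by rewrite Hs.
Qed.
Lemma Pf_inv m n : Pf m n -> exists s, [/\ code s = m, size s = Nf n &
   bad (nth false s) n || (s == nseq (Nf n) true)].
Proof.
have [s <-] := code_surj m => H; exists s.
have Hs : size s = Nf n.
  move: H; rewrite /Pf => /andP [/andP [h1 h2] _].
  have l1 := code_lb s; have l2 := code_ub s.
  have a1 : 2 ^ size s < 2 ^ (Nf n).+1 by lia.
  have a2 : 2 ^ Nf n < 2 ^ (size s).+1 by lia.
  rewrite ltn_exp2l // in a1; rewrite ltn_exp2l // in a2; lia.
by split => //; rewrite -Pf_code.
Qed.


Lemma posm_neq n a b a' b' : a != b -> a' != b' -> a < n -> b < n -> a' < n -> b' < n ->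
  ~ ((a = a' /\ b = b') \/ (a = b' /\ b = a')) -> posm n a b != posm n a' b'.
Proof. move=> *; apply/eqP => /posm_inj; tauto. Qed.

Lemma pair_count n i j : i < j -> j < n ->
  2 * 4 ^ (n - 2) * S (fun t : (Nf n).-tuple bool => pairok (bt t) n i j) = 3 ^ (n - 2) * 2 ^ Nf n.
Proof.
move=> ij jn.
set ks := [seq k <- iota 0 n | (k != i) && (k != j)].
have Hsz : size ks = n - 2.
  have -> : ks = rem j (rem i (iota 0 n)).
    rewrite (rem_filter i) ?iota_uniq // (rem_filter j) ?filter_uniq ?iota_uniq //.
    rewrite -filter_predI /ks; apply: eq_filter => k /=; by rewrite andbC.
  have jin : j \in rem i (iota 0 n).
    rewrite (rem_filter i) ?iota_uniq // mem_filter mem_iota /=; apply/andP; split; [apply/eqP; lia | lia].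
  rewrite (size_rem jin) size_rem ?mem_iota ?size_iota //; lia.
have posc : pos n i j = posm n i j by rewrite /posm ij.
have Hk : forall k, k \in ks -> [/\ k < n, k != i & k != j].
  move=> k; rewrite mem_filter mem_iota => /andP [/andP [h1 h2] /andP [_ h3]]; by split.
rewrite -Hsz -(@count_gen (Nf n) (pos n i j) (fun k => posm n i k) (fun k => posm n j k) ks).
- congr (_ * _); apply: S_ext => t; rewrite /pairok ij /= all_filter.
  congr (_ && _); apply: eq_all => k /=; rewrite /innerb.
  by case: (k == i); case: (k == j).
- exact: pos_N.
- by rewrite filter_uniq ?iota_uniq.
- move=> k /Hk [h1 h2 h3]; rewrite posc; split.
  + apply: posm_N => //; lia.
  + apply: posm_N => //; lia.
  + apply: posm_neq; lia.
  + apply: posm_neq; lia.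
  + apply: posm_neq; lia.
- move=> k k' /Hk [h1 h2 h3] /Hk [h1' h2' h3'] kk'; split; apply: posm_neq; lia.
Qed.

Lemma has_le_sum (p : pred nat) s : has p s <= \sum_(x <- s) p x.
Proof. elim: s => [|x s IH]; rewrite ?big_nil ?big_cons //=; case: (p x) => /=; lia. Qed.
Lemma sum_const_seq (s : seq nat) c : \sum_(x <- s) c = size s * c.
Proof. elim: s => [|x s IH]; rewrite ?big_nil ?big_cons //= IH; lia. Qed.

Lemma bad_count n :
  2 * 4 ^ (n - 2) * S (fun t : (Nf n).-tuple bool => bad (bt t) n) <= n * n * (3 ^ (n - 2) * 2 ^ Nf n).
Proof.
set K := 2 * 4 ^ (n - 2).
have -> : n * n * (3 ^ (n - 2) * 2 ^ Nf n) = \sum_(i <- iota 0 n) \sum_(j <- iota 0 n) (3 ^ (n - 2) * 2 ^ Nf n).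
  by rewrite !sum_const_seq size_iota -mulnA.
apply: (@leq_trans (K * \sum_(t : (Nf n).-tuple bool) \sum_(i <- iota 0 n) \sum_(j <- iota 0 n) pairok (bt t) n i j)).
  rewrite leq_mul2l; apply/orP; right; apply: leq_sum => t _.
  apply: (leq_trans (has_le_sum _ _)); apply: leq_sum => i _; exact: has_le_sum.
rewrite (exchange_big) big_distrr /=; rewrite big_seq_cond [X in _ <= X]big_seq_cond.
apply: leq_sum => i; rewrite andbT mem_iota => /andP [_ Hi]; rewrite add0n in Hi.
rewrite (exchange_big) big_distrr /=; rewrite big_seq_cond [X in _ <= X]big_seq_cond.
apply: leq_sum => j; rewrite andbT mem_iota => /andP [_ Hj]; rewrite add0n in Hj.
case: (ltnP i j) => ij.
  by rewrite /K -(pair_count ij Hj).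
rewrite big1 ?muln0 // => t _; by rewrite /pairok (ltnNge i j) ij.
Qed.

Lemma cntf_sum n t : cntf n t = \sum_(m < t) Pf m n.
Proof. elim: t => [|t IH]; by rewrite ?big_ord0 // big_ord_recr /= IH. Qed.
Lemma sum_eq_ord a t : \sum_(m < t) (a == m :> nat) = (a < t).
Proof.
elim: t => [|t IH]; first by rewrite big_ord0.
rewrite big_ord_recr /= IH ltnS (leq_eqVlt a t); case: ltngtP => //= H.
Qed.
Lemma sum_tuple_eq N (t0 : N.-tuple bool) :
  \sum_(t : N.-tuple bool) (t == t0 : nat) = 1.
Proof. by rewrite -big_mkcond /= big_pred1_eq. Qed.

Lemma tot_bound n :
  2 * 4 ^ (n - 2) * cntf n (2 ^ (Nf n).+1) <= n * n * (3 ^ (n - 2) * 2 ^ Nf n) + 2 * 4 ^ (n - 2).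
Proof.
set N := Nf n; set B := 2 ^ N.+1.
set Q := fun t : N.-tuple bool => bad (bt t) n || (val t == nseq N true).
have H1 : cntf n B <= \sum_(t : N.-tuple bool) (Q t : nat).
  rewrite cntf_sum.
  apply: (@leq_trans (\sum_(m < B) \sum_(t : N.-tuple bool) ((code t == m) * Q t))).
    apply: leq_sum => m _; case E: (Pf m n) => //=.
    have [s [Hc Hs HQ]] := Pf_inv E.
    have Hs' : size s == N by apply/eqP.
    rewrite (bigD1 (Tuple Hs')) //= Hc eqxx /Q /bt /=.
    move: HQ; rewrite /N; case: (_ || _) => //; lia.
  rewrite exchange_big /=; apply: leq_sum => t _.
  rewrite (eq_bigr (fun m : 'I_B => (code t == m :> nat) * Q t)) //.
  rewrite -big_distrl /= sum_eq_ord; case: (code t < B); lia.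
have H2 : \sum_(t : N.-tuple bool) (Q t : nat) <= S (fun t : N.-tuple bool => bad (bt t) n) + 1.
  rewrite -(sum_tuple_eq [tuple of nseq N true]) /S -big_split /=.
  apply: leq_sum => t _; rewrite /Q.
  have -> : (val t == nseq N true) = (t == [tuple of nseq N true]) by [].
  by case: bad; case: (_ == _).
have := bad_count n; rewrite -/N => H3.
have H4 := leq_trans H1 H2.
have : 2 * 4 ^ (n - 2) * cntf n B <= 2 * 4 ^ (n - 2) * (S (fun t : N.-tuple bool => bad (bt t) n) + 1).
  by rewrite leq_mul2l H4 orbT.
rewrite mulnDr muln1; lia.
Qed.


Lemma nth_flat (T : Type) (x0 : T) (rows : seq (seq T)) a t :
  a < size rows -> t < size (nth [::] rows a) ->
  nth x0 (flatten rows) (sumn (map size (take a rows)) + t) = nth x0 (nth [::] rows a) t.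
Proof.
elim: rows a => [//|r rows IH] [|a] /= Ha Ht; first by rewrite nth_cat Ht.
by rewrite nth_cat -addnA ltnNge leq_addr /= addKn IH.
Qed.

Lemma filter_iota_gt a n : [seq k <- iota 0 n | a < k] = iota a.+1 (n - a.+1).
Proof.
elim: n => [//|n IH]; rewrite -[n.+1]addn1 iotaD filter_cat IH /=.
case: ltnP => H /=.
  rewrite (_ : n + 1 - a.+1 = (n - a.+1) + 1); last lia.
  by rewrite iotaD /= (_ : a.+1 + (n - a.+1) = n) //; lia.
rewrite cats0; congr iota; lia.
Qed.

Section G.
Variable n : nat.
Variable adj : rel 'I_n.
Definition row (i : 'I_n) := [seq adj i j | j <- [seq j : 'I_n <- enum 'I_n | i < j]].
Lemma gc_rows : graph_code adj = flatten (map row (enum 'I_n)). Proof. by []. Qed.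
Lemma val_filter (i : 'I_n) : map val [seq j : 'I_n <- enum 'I_n | i < j] = iota i.+1 (n - i.+1).
Proof. by rewrite -(filter_map val (fun k => i < k)) val_enum_ord filter_iota_gt. Qed.
Lemma size_row i : size (row i) = n - i.+1.
Proof. by rewrite size_map -(size_map val) val_filter size_iota. Qed.
Lemma sumn_rows a : a <= n -> sumn (map size (take a (map row (enum 'I_n)))) = rsf n a.
Proof.
move=> Ha; rewrite -map_take -map_comp (eq_map (g := fun i : 'I_n => n - (val i).+1)); last first.
  by move=> i /=; rewrite size_row.
rewrite (map_comp (fun k => n - k.+1) val) map_take val_enum_ord take_iota.
rewrite (_ : minn a n = a); last lia.
elim: a Ha => [//|a IH] Ha; rewrite -addn1 iotaD map_cat sumn_cat IH /=; last lia.
rewrite addn1 rsfS; lia.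
Qed.
Lemma size_gc : size (graph_code adj) = Nf n.
Proof.
rewrite gc_rows size_flatten /shape -(take_size (map row _)) sumn_rows //.
by rewrite size_map size_enum_ord. by rewrite size_map size_enum_ord.
Qed.
Lemma nth_gc (i j : 'I_n) : i < j -> nth false (graph_code adj) (pos n i j) = adj i j.
Proof.
move=> ij; rewrite /pos -sumn_rows ?(ltnW (ltn_ord i)) // gc_rows nth_flat; first last.
- rewrite (nth_map i) ?size_enum_ord // nth_ord_enum size_row.
  have := ltn_ord j; lia.
- by rewrite size_map size_enum_ord.
rewrite (nth_map i) ?size_enum_ord // nth_ord_enum /row.
have Hs : (j - i).-1 < size [seq j0 : 'I_n <- enum 'I_n | i < j0].
  rewrite -(size_map val) val_filter size_iota; have := ltn_ord j; lia.
rewrite (nth_map i) //; congr (adj i _); apply: val_inj.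
rewrite -(nth_map i 0) // val_filter nth_iota -[val j]/(nat_of_ord j); first by lia.
have := ltn_ord j; lia.
Qed.
End G.


Section Gr.
Variable n : nat.
Variable adj : rel 'I_n.
Hypothesis sym : forall i j, adj i j = adj j i.
Hypothesis irr : forall i, ~~ adj i i.

Lemma posm_gc (i k : 'I_n) : i != k -> nth false (graph_code adj) (posm n i k) = adj i k.
Proof.
move=> ik; rewrite /posm; case: ltngtP => h.
- exact: nth_gc.
- by rewrite nth_gc // sym.
- by move: ik; rewrite -(inj_eq val_inj) /= h eqxx.
Qed.

Lemma gc_all_true : (forall i j : 'I_n, i < j -> adj i j) -> graph_code adj = nseq (Nf n) true.
Proof.
move=> H; rewrite -(size_gc adj).
have : all id (graph_code adj).
  rewrite gc_rows; apply/allP => b /flattenP [r /mapP [i _ ->]].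
  move=> /mapP [j]; rewrite mem_filter => /andP [ij _] ->; exact: H.
elim: (graph_code adj) => [//|b s IH] /= /andP [-> /IH <-] //.
Qed.

Lemma common (i j : 'I_n) : i < j -> ~~ bad (nth false (graph_code adj)) n ->
  adj i j \/ exists k, adj i k && adj k j.
Proof.
move=> ij /hasPn /(_ i); rewrite mem_iota ltn_ord => /(_ isT) /hasPn /(_ j).
rewrite mem_iota ltn_ord => /(_ isT); rewrite /pairok ij nth_gc //= negb_and negbK.
case/orP => [->|]; first by left.
case/allPn => k; rewrite mem_iota /= => Hk; rewrite /innerb negb_or negb_or negbK.
case/andP => /andP [ki kj] /andP [b1 b2]; right.
exists (Ordinal Hk).
have ki' : i != Ordinal Hk by rewrite -(inj_eq val_inj) eq_sym.
have kj' : j != Ordinal Hk by rewrite -(inj_eq val_inj) eq_sym.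
by rewrite -(posm_gc ki') b1 -(sym j) -(posm_gc kj') b2.
Qed.

Lemma diam2 : (forall i j : 'I_n, i != j -> adj i j \/ exists k, adj i k && adj k j) ->
  (exists i j : 'I_n, i != j /\ ~~ adj i j) -> diameter_is adj 2.
Proof.
move=> H1 [i0 [j0 [ij0 nadj0]]].
have no0 : forall i j : 'I_n, i != j -> ~ walk_le adj i j 0.
  move=> i j ij [s [Hs _ Hl]]; move: Hs; rewrite leqn0 => /nilP Es; subst s.
  by move: ij; rewrite -[j]Hl /= eqxx.
have no1 : forall i j : 'I_n, i != j -> ~~ adj i j -> ~ walk_le adj i j 1.
  move=> i j ij na [[|x [|y s]] [Hs Hp Hl]] //.
  - by move: ij; rewrite -[j]Hl /= eqxx.
  - by move: Hp Hl => /= /andP [a _] xj; move: na; rewrite -xj a.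
have d2 : forall i j : 'I_n, i != j -> ~~ adj i j -> is_dist adj i j 2.
  move=> i j ij na; split.
    case: (H1 i j ij) => [a|[k /andP [a1 a2]]]; first by rewrite a in na.
    by exists [:: k; j]; split => //=; rewrite a1 a2.
  case=> [_|[_|//]]; [exact: no0 | exact: no1].
split; last by exists i0, j0; exact: d2.
move=> i j; case: (eqVneq i j) => [<-|ij].
  exists 0 => //; split; first by exists [::].
  by [].
case: (boolP (adj i j)) => a.
  exists 1 => //; split; first by exists [:: j]; split => //=; rewrite a.
  case=> [_|//]; exact: no0.
by exists 2 => //; exact: d2.
Qed.
End Gr.


Lemma pow34 m : 3 ^ m * 4 ^ (m %/ 5) <= 4 ^ m.
Proof.
have H : forall q r, 3 ^ (5 * q + r) * 4 ^ q <= 4 ^ (5 * q + r).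
  move=> q r; elim: q => [|q IH].
    rewrite muln0 add0n muln1; elim: r => [//|r IH]; rewrite !expnS; lia.
  rewrite (_ : 5 * q.+1 + r = 5 + (5 * q + r)); last lia.
  rewrite expnD (expnD 4) (_ : 3 ^ 5 = 243) // (_ : 4 ^ 5 = 1024) // expnS; nia.
have E : 5 * (m %/ 5) + m %% 5 = m by rewrite mulnC -divn_eq.
by have := H (m %/ 5) (m %% 5); rewrite E.
Qed.

Lemma sq_pow t : t.+1 * t.+1 <= 4 * 2 ^ t.
Proof.
elim: t => [//|t IH]; case: t IH => [//|t] IH; case: t IH => [//|t] IH.
rewrite (expnS 2 t.+2); move: IH; nia.
Qed.

Lemma n2_bound n : n * n <= 1600 * 2 ^ (n %/ 20).
Proof.
have h2 := sq_pow (n %/ 20).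
have h1 : n <= 20 * (n %/ 20).+1 by have := divn_eq n 20; have := ltn_pmod n (isT : 0 < 20); lia.
have := leq_mul h1 h1; nia.
Qed.

Lemma growth c d n : 20 * d <= n -> 20 * (c + 20) <= n ->
  2 ^ (c + d + 3) * (n * n) * 3 ^ (n - 2) <= 4 ^ (n - 2).
Proof.
move=> hd hn.
set m := n - 2; set q := m %/ 5; set e := n %/ 20.
have he : c + d + 3 + 11 + e <= 2 * q by rewrite /q /e /m; lia.
have h1 : 2 ^ (c + d + 3) * (n * n) <= 4 ^ q.
  apply: (leq_trans (leq_mul (leqnn _) (n2_bound n))).
  rewrite -/e (_ : 4 ^ q = 2 ^ (2 * q)); last by rewrite expnM.
  apply: (@leq_trans (2 ^ (c + d + 3 + 11 + e))); last by rewrite leq_exp2l.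
  rewrite !expnD (_ : 2 ^ 11 = 2048) //; nia.
apply: (leq_trans _ (pow34 m)); rewrite mulnC leq_mul2l; apply/orP; right; exact: h1.
Qed.


Lemma KC_le p q y x : describes p q y x -> KC p x y <= size q.
Proof.
move=> Hd; rewrite /KC; case: excluded_middle_informative => [H|[]]; last by exists q.
case: ex_minnP => k _ Hmin; apply: Hmin.
rewrite /has_descr_of_size; case: excluded_middle_informative => // [[]]; by exists q.
Qed.

Lemma final_ineq s c d N m T Y :
  2 ^ s <= T -> 2 * 4 ^ m * T <= Y * 2 ^ N + 2 * 4 ^ m ->
  2 ^ (c + d + 3) * Y <= 4 ^ m -> c + d + 2 <= N -> s + c + d + 1 <= N.
Proof.
move=> h1 h2 h3 h4.
rewrite -(leq_exp2l _ _ (isT : 1 < 2)).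
set A := 2 ^ (c + d + 1).
have eA : 2 ^ (c + d + 3) = 4 * A by rewrite /A !addnS !expnS; lia.
have eA2 : 2 * A <= 2 ^ N by rewrite /A -expnS leq_exp2l // -addnS.
have F0 : 0 < 4 ^ m by rewrite expn_gt0.
rewrite (_ : s + c + d + 1 = s + (c + d + 1)); last lia.
rewrite expnD -/A.
have : 2 * 4 ^ m * (2 ^ s * A) <= 2 * 4 ^ m * 2 ^ N.
  apply: (@leq_trans (A * (Y * 2 ^ N + 2 * 4 ^ m))).
    have k1 : 2 * 4 ^ m * 2 ^ s * A <= 2 * 4 ^ m * T * A.
      by rewrite leq_mul2r leq_mul2l h1 !orbT.
    have k2 : 2 * 4 ^ m * T * A <= (Y * 2 ^ N + 2 * 4 ^ m) * A.
      by rewrite leq_mul2r h2 orbT.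
    rewrite mulnA (mulnC A); exact: leq_trans k1 k2.
  rewrite eA in h3; nia.
rewrite leq_mul2l; case/orP => //; rewrite muln_eq0 expn_eq0 /=; lia.
Qed.

Lemma Nf_ge n : 2 * (n - 2) <= Nf n.
Proof.
rewrite Nf_closed; have : 4 * (n - 2) <= n * (n - 1) by nia.
set X := n * (n - 1); lia.
Qed.

Unset Implicit Arguments.
Theorem lemma2 (U : prf) (hU : universal U) (delta : nat -> nat)
  (hdelta : small_o_n delta) :
  exists n0 : nat, forall n : nat, n0 <= n ->
    forall adj : rel 'I_n,
      (forall i j, adj i j = adj j i) -> (forall i, ~~ adj i i) ->
      random_graph U delta adj -> diameter_is adj 2.
Proof.
have [c Hc] := hU Dp.
have [Nd HNd] := hdelta 20 isT.
exists (maxn Nd (20 * (c + 20))) => n Hn adj sym irr Hr.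
have hd : 20 * delta n <= n by apply: HNd; lia.
have hn : 20 * (c + 20) <= n by lia.
set y := cond_info n (delta n); set x := graph_code adj.
have Hsx : size x = Nf n := size_gc adj.
case E: (Pf (code x) n).
  exfalso.
  set r := cntf n (code x); have [q Hq] := code_surj r.
  have Hdesc : describes Dp q y x by rewrite /describes Hq; exact: eval_D.
  have [q' Hq' Hsz] := Hc q y x Hdesc.
  have Hk := KC_le Hq'.
  move: Hr; rewrite /random_graph -Nf_closed -/x -/y => Hr.
  have Hlt : code x < 2 ^ (Nf n).+1 by have := code_ub x; rewrite Hsx; lia.
  have h1 : 2 ^ size q <= cntf n (2 ^ (Nf n).+1).
    apply: (leq_trans (code_lb q)); rewrite Hq.
    apply: (@leq_trans (cntf n (code x).+1)); first by rewrite /= E /r addn1.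
    exact: cntf_mono.
  have h2 := tot_bound n; rewrite mulnA in h2.
  have h3 := growth hd hn; rewrite -mulnA in h3.
  have h4 : c + delta n + 2 <= Nf n by have := Nf_ge n; lia.
  have := final_ineq h1 h2 h3 h4; lia.
move: E; rewrite Pf_code // => /norP [nb nc].
apply: diam2 => //.
  move=> i j ij; case: (ltngtP i j) => h.
  - exact: common.
  - case: (common sym h nb) => [a|[k /andP [a1 a2]]]; first by left; rewrite sym.
    by right; exists k; rewrite sym a2 sym a1.
  - by move: ij; rewrite -(inj_eq val_inj) /= h eqxx.
case: (boolP [exists i : 'I_n, exists j : 'I_n, (i < j) && ~~ adj i j]).
  case/existsP => i /existsP [j /andP [ij na]]; exists i, j; split => //.
  by rewrite -(inj_eq val_inj) /= (ltn_eqF ij).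
rewrite negb_exists => /forallP H.
have : x = nseq (Nf n) true.
  apply: gc_all_true => i j ij; move: (H i); rewrite negb_exists => /forallP /(_ j).
  by rewrite negb_and ij /= negbK.
by move/eqP; rewrite (negbTE nc).
Qed.
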